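(* Let $X$ be a connected $G$-complex on which $G$ acts properly and cocompactly. Then any $G$-equivariant immersion $\phi\colon X\to X$ is an isomorphism.
   Context: Complexes are combinatorial 2-complexes and maps are combinatorial; a $G$-complex has a cellular $G$-action without inversions. An immersion is a locally injective combinatorial map. *)

(* Defs.v *)
From Stdlib Require Import List Relations.

Record Group := {
  gcar :> Type;
  gmul : gcar -> gcar -> gcar;
  gone : gcar;
  ginv : gcar -> gcar;
  gmulA : forall a b c, gmul a (gmul b c) = gmul (gmul a b) c;
  gmul1 : forall a, gmul gone a = a;
  gmulV : forall a, gmul (ginv a) a = gone
}.

(** * Combinatorial 2-complexes
    - [V]: vertices; [D]: darts (oriented edges), [rev] reverses a dart
      (a fixed-point-free involution), [src] its initial vertex;
      an (unoriented) edge is a pair {d, rev d}.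
    - [F]: 2-cells. Each 2-cell is a polygon attached along a closed
      combinatorial path.  [S] is the set of *oriented sides* of the
      2-cells: a 2-cell whose boundary path has length n has 2n oriented
      sides (n for each of the two orientations of the polygon).
      [lab s] is the dart traversed by the side [s], [nxt s] is the next side
      in the same orientation, [flip s] is the same side traversed in the
      opposite orientation, and [cell s] the 2-cell it bounds. *)
Record complex := {
  V : Type; D : Type; S : Type; F : Type;
  src : D -> V;
  rev : D -> D;
  lab : S -> D;
  nxt : S -> S;
  flip : S -> S;
  cell : S -> F;
  rev_involutive : forall d, rev (rev d) = d;
  rev_nofix : forall d, rev d <> d;
  nxt_path : forall s, src (lab (nxt s)) = src (rev (lab s));
  nxt_periodic : forall s, exists n, 0 < n /\ Nat.iter n nxt s = s;
  flip_involutive : forall s, flip (flip s) = s;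
  flip_lab : forall s, lab (flip s) = rev (lab s);
  flip_nxt : forall s, nxt (flip (nxt s)) = flip s;
  flip_other_orientation : forall s n, Nat.iter n nxt s <> flip s;
  cell_nxt : forall s, cell (nxt s) = cell s;
  cell_flip : forall s, cell (flip s) = cell s;
  cell_sides : forall s t, cell s = cell t ->
     exists n, t = Nat.iter n nxt s \/ t = Nat.iter n nxt (flip s);
  cell_nonempty : forall f, exists s, cell s = f
}.

Arguments src {_} _.  Arguments rev {_} _.  Arguments lab {_} _.
Arguments nxt {_} _.  Arguments flip {_} _.  Arguments cell {_} _.

(** Combinatorial maps: cells go to cells of the same dimension, and each
    2-cell is mapped bijectively (homeomorphically) onto a 2-cell,
    possibly reversing its orientation (via [flip]). *)
Record is_cmap (X Y : complex) (fV : V X -> V Y) (fD : D X -> D Y)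
    (fS : S X -> S Y) (fF : F X -> F Y) : Prop := {
  cm_src : forall d, src (fD d) = fV (src d);
  cm_rev : forall d, fD (rev d) = rev (fD d);
  cm_lab : forall s, lab (fS s) = fD (lab s);
  cm_nxt : forall s, fS (nxt s) = nxt (fS s);
  cm_flip : forall s, fS (flip s) = flip (fS s);
  cm_cell : forall s, cell (fS s) = fF (cell s);
  cm_cell_inj : forall s t, cell s = cell t -> fS s = fS t -> s = t
}.

(** Immersion = locally injective combinatorial map, i.e. injective on the
    link of every vertex: injective on the darts issuing from a vertex
    (link vertices) and on the (oriented) corners of 2-cells at a vertex
    (link edges; the oriented side [s] represents the corner between the
    side preceding [s] and [s], at the vertex [src (lab s)]). *)
Definition is_immersion (X Y : complex) fV fD fS fF : Prop :=
  is_cmap X Y fV fD fS fF /\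
  (forall d d', src d = src d' -> fD d = fD d' -> d = d') /\
  (forall s s', src (lab s) = src (lab s') -> fS s = fS s' -> s = s').

Definition bij {A B : Type} (f : A -> B) : Prop :=
  exists g : B -> A, (forall a, g (f a) = a) /\ (forall b, f (g b) = b).

(** Isomorphism: a combinatorial map bijective on cells of every dimension
    (its inverse is then automatically combinatorial). *)
Definition is_iso (X Y : complex) fV fD fS fF : Prop :=
  is_cmap X Y fV fD fS fF /\ bij fV /\ bij fD /\ bij fS /\ bij fF.

Definition adjacent (X : complex) (u v : V X) : Prop :=
  exists d : D X, src d = u /\ src (rev d) = v.

Definition connected (X : complex) : Prop :=
  forall u v : V X, clos_refl_trans (V X) (adjacent X) u v.

Record Gcomplex (G : Group) (X : complex) := {
  aV : G -> V X -> V X;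
  aD : G -> D X -> D X;
  aS : G -> S X -> S X;
  aF : G -> F X -> F X;
  act_cmap : forall g, is_cmap X X (aV g) (aD g) (aS g) (aF g);
  act_oneV : forall v, aV (gone G) v = v;
  act_oneD : forall d, aD (gone G) d = d;
  act_oneS : forall s, aS (gone G) s = s;
  act_oneF : forall f, aF (gone G) f = f;
  act_mulV : forall g h v, aV (gmul G g h) v = aV g (aV h v);
  act_mulD : forall g h d, aD (gmul G g h) d = aD g (aD h d);
  act_mulS : forall g h s, aS (gmul G g h) s = aS g (aS h s);
  act_mulF : forall g h f, aF (gmul G g h) f = aF g (aF h f);
  act_no_inversion : forall g d, aD g d <> rev d
}.

Arguments aV {G X} _ _ _.  Arguments aD {G X} _ _ _.
Arguments aS {G X} _ _ _.  Arguments aF {G X} _ _ _.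

Definition finite_set {T : Type} (P : T -> Prop) : Prop :=
  exists l : list T, forall x, P x -> In x l.

Definition proper_action {G X} (A : Gcomplex G X) : Prop :=
  (forall v, finite_set (fun g : G => aV A g v = v)) /\
  (forall d, finite_set (fun g : G => aD A g d = d)) /\
  (forall f, finite_set (fun g : G => aF A g f = f)).

Definition cocompact_action {G X} (A : Gcomplex G X) : Prop :=
  (exists l : list (V X), forall v, exists g v0, In v0 l /\ v = aV A g v0) /\
  (exists l : list (D X), forall d, exists g d0, In d0 l /\ d = aD A g d0) /\
  (exists l : list (F X), forall f, exists g f0, In f0 l /\ f = aF A g f0).

Definition equivariant {G X} (A : Gcomplex G X) fV fD fS fF : Prop :=
  (forall g v, fV (aV A g v) = aV A g (fV v)) /\
  (forall g d, fD (aD A g d) = aD A g (fD d)) /\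
  (forall g s, fS (aS A g s) = aS A g (fS s)) /\
  (forall g f, fF (aF A g f) = aF A g (fF f)).

(* Main.v *)
From Stdlib Require Import List Arith Lia Classical IndefiniteDescription Relations.
Require Import Defs.

Notation succ := Datatypes.S.

Lemma gmulV_r (G : Group) (a : G) : gmul G a (ginv G a) = gone G.
Proof.
  transitivity (gmul G (gmul G (ginv G (ginv G a)) (ginv G a)) (gmul G a (ginv G a))).
  { rewrite gmulV, gmul1; reflexivity. }
  rewrite <- gmulA. rewrite (gmulA G (ginv G a) a (ginv G a)).
  rewrite gmulV, gmul1. apply gmulV.
Qed.

Lemma gmul1_r (G : Group) (a : G) : gmul G a (gone G) = a.
Proof. rewrite <- (gmulV G a), gmulA, gmulV_r, gmul1; reflexivity. Qed.

Lemma gcancel_l (G : Group) (a b c : G) : gmul G a b = gmul G a c -> b = c.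
Proof.
  intro H. rewrite <- (gmul1 G b), <- (gmul1 G c), <- (gmulV G a), <- !gmulA, H.
  reflexivity.
Qed.

Lemma gcancel_r (G : Group) (a b c : G) : gmul G b a = gmul G c a -> b = c.
Proof.
  intro H. rewrite <- (gmul1_r G b), <- (gmul1_r G c), <- (gmulV_r G a), !gmulA, H.
  reflexivity.
Qed.

Lemma act_inv_l (G : Group) (T : Type) (act : G -> T -> T)
  (one : forall x, act (gone G) x = x)
  (mul : forall g h x, act (gmul G g h) x = act g (act h x)) g x :
  act (ginv G g) (act g x) = x.
Proof. rewrite <- mul, gmulV, one; reflexivity. Qed.

Lemma act_inv_r (G : Group) (T : Type) (act : G -> T -> T)
  (one : forall x, act (gone G) x = x)
  (mul : forall g h x, act (gmul G g h) x = act g (act h x)) g x :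
  act g (act (ginv G g) x) = x.
Proof. rewrite <- mul, gmulV_r, one; reflexivity. Qed.

Lemma act_inj (G : Group) (T : Type) (act : G -> T -> T)
  (one : forall x, act (gone G) x = x)
  (mul : forall g h x, act (gmul G g h) x = act g (act h x)) g x y :
  act g x = act g y -> x = y.
Proof.
  intro H. rewrite <- (act_inv_l G T act one mul g x), H, act_inv_l; auto.
Qed.

Lemma iter_comm {A B : Type} (p : A -> B) (f : A -> A) (f' : B -> B)
  (H : forall x, p (f x) = f' (p x)) n x :
  p (Nat.iter n f x) = Nat.iter n f' (p x).
Proof. induction n; simpl; [reflexivity|]. rewrite H, IHn; reflexivity. Qed.

Fixpoint pre {T : Type} (u : nat -> T) (n : nat) : list T :=
  match n with 0 => nil | succ m => u m :: pre u m end.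

Lemma pigeon {T : Type} (u : nat -> T) (l : list T) :
  (forall i, In (u i) l) -> exists a b, a < b /\ u a = u b.
Proof.
  intro Hl. apply NNPP; intro H.
  assert (Hin : forall n y, In y (pre u n) -> exists i, i < n /\ y = u i).
  { induction n; simpl; intros y Hy; [contradiction|].
    destruct Hy as [<-|Hy]; [exists n; split; auto|].
    destruct (IHn y Hy) as [i [Hi ->]]; exists i; split; auto. }
  assert (ND : forall n, NoDup (pre u n)).
  { induction n; simpl; constructor; auto. intro Hy.
    destruct (Hin n _ Hy) as [i [Hi He]]. apply H; exists i, n; split; auto. }
  assert (Len : forall n, length (pre u n) = n).
  { induction n; simpl; auto. }
  assert (Inc : forall n, incl (pre u n) l).
  { intros n y Hy. destruct (Hin n y Hy) as [i [_ ->]]; auto. }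
  pose proof (NoDup_incl_length (ND (succ (length l))) (Inc _)).
  rewrite Len in H0. lia.
Qed.

Lemma orbit_pigeon (G : Group) (T : Type) (act : G -> T -> T)
  (one : forall x, act (gone G) x = x)
  (mul : forall g h x, act (gmul G g h) x = act g (act h x))
  (L : list T) (HL : forall x, exists g y, In y L /\ x = act g y) (u : nat -> T) :
  exists a b h, a < b /\ u b = act h (u a).
Proof.
  assert (HL' : forall i, exists p : G * T, In (snd p) L /\ u i = act (fst p) (snd p)).
  { intro i. destruct (HL (u i)) as [g [y [Hy He]]]. exists (g, y); auto. }
  set (r := fun i => proj1_sig (constructive_indefinite_description _ (HL' i))).
  assert (Hr : forall i, In (snd (r i)) L /\ u i = act (fst (r i)) (snd (r i))).
  { intro i. unfold r. destruct (constructive_indefinite_description _ (HL' i)); auto. }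
  destruct (pigeon (fun i => snd (r i)) L (fun i => proj1 (Hr i))) as [a [b [Hab He]]].
  exists a, b, (gmul G (fst (r b)) (ginv G (fst (r a)))). split; auto.
  rewrite mul, (proj2 (Hr a)), act_inv_l; auto. rewrite He. apply (proj2 (Hr b)).
Qed.

Lemma iter_inj_gen {T : Type} (P : T -> Prop) (f : T -> T)
  (HP : forall x, P x -> P (f x))
  (Hinj : forall x y, P x -> P y -> f x = f y -> x = y) :
  forall n x y, P x -> P y -> Nat.iter n f x = Nat.iter n f y -> x = y.
Proof.
  assert (HPi : forall n x, P x -> P (Nat.iter n f x)).
  { induction n; simpl; auto. }
  induction n; simpl; intros x y Px Py H; auto.
  all: try (apply IHn; auto; apply Hinj; auto).
Qed.

Lemma fin_perm {T : Type} (P : T -> Prop) (l : list T) (Hl : forall x, P x -> In x l)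
  (f : T -> T) (HP : forall x, P x -> P (f x))
  (Hinj : forall x y, P x -> P y -> f x = f y -> x = y) x :
  P x -> exists j, 0 < j /\ Nat.iter j f x = x.
Proof.
  intro Px.
  assert (HPi : forall n x, P x -> P (Nat.iter n f x)).
  { induction n; simpl; auto. }
  destruct (pigeon (fun i => Nat.iter i f x) l (fun i => Hl _ (HPi i x Px)))
    as [a [b [Hab He]]].
  exists (b - a). split; [lia|].
  replace b with (a + (b - a)) in He by lia. rewrite Nat.iter_add in He.
  symmetry. apply (iter_inj_gen P f HP Hinj a); auto.
Qed.

Lemma orbit_surj (G : Group) (T : Type) (act : G -> T -> T)
  (one : forall x, act (gone G) x = x)
  (mul : forall g h x, act (gmul G g h) x = act g (act h x))
  (L : list T) (HL : forall x, exists g y, In y L /\ x = act g y) (f : T -> T)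
  (eq : forall g x, f (act g x) = act g (f x))
  (inj : forall x y, f x = f y -> x = y) :
  forall y, exists x, f x = y.
Proof.
  intro y.
  destruct (orbit_pigeon G T act one mul L HL (fun i => Nat.iter i f y))
    as [a [b [h [Hab He]]]]. simpl in He.
  replace b with (a + (b - a)) in He by lia. rewrite Nat.iter_add in He.
  rewrite (iter_comm (act h) f f (fun x => eq_sym (eq h x))) in He.
  apply (iter_inj_gen (fun _ => True) f (fun _ _ => I) (fun x y _ _ => inj x y) a) in He;
    auto.
  destruct (b - a) as [|m] eqn:Hm; [lia|]. simpl in He.
  exists (act (ginv G h) (Nat.iter m f y)).
  rewrite eq, He, act_inv_l; auto.
Qed.

Lemma inj_surj_bij {A B : Type} (f : A -> B) :
  (forall x y, f x = f y -> x = y) -> (forall y, exists x, f x = y) -> bij f.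
Proof.
  intros Hi Hs.
  exists (fun b => proj1_sig (constructive_indefinite_description _ (Hs b))).
  split.
  - intro a. destruct (constructive_indefinite_description _ (Hs (f a))); simpl; auto.
  - intro b. destruct (constructive_indefinite_description _ (Hs b)); simpl; auto.
Qed.

Theorem lemma6p10 (G : Group) (X : complex) (A : Gcomplex G X)
  (Xconn : connected X) (Aproper : proper_action A) (Acocpt : cocompact_action A)
  (fV : V X -> V X) (fD : D X -> D X) (fS : S X -> S X) (fF : F X -> F X) :
  is_immersion X X fV fD fS fF ->
  equivariant A fV fD fS fF ->
  is_iso X X fV fD fS fF.
Proof.
  intros [Hcm [HimD HimS]] [eV [eD [eS eF]]].
  destruct Aproper as [pV [pD pF]].
  destruct Acocpt as [[LV HLV] [[LD HLD] [LF HLF]]].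
  pose proof (act_oneV G X A) as oV. pose proof (act_mulV G X A) as mV.
  pose proof (act_oneD G X A) as oD. pose proof (act_mulD G X A) as mD.
  pose proof (act_oneF G X A) as oF. pose proof (act_mulF G X A) as mF.
  assert (asrc : forall g d, src (aD A g d) = aV A g (src d))
    by (intros; apply (cm_src _ _ _ _ _ _ (act_cmap G X A g))).
  assert (arev : forall g d, aD A g (rev d) = rev (aD A g d))
    by (intros; apply (cm_rev _ _ _ _ _ _ (act_cmap G X A g))).
  assert (iV_src : forall n d, src (Nat.iter n fD d) = Nat.iter n fV (src d))
    by (intros; apply iter_comm; apply (cm_src _ _ _ _ _ _ Hcm)).
  assert (iD_rev : forall n d, rev (Nat.iter n fD d) = Nat.iter n fD (rev d))
    by (intros; apply iter_comm; intro; symmetry; apply (cm_rev _ _ _ _ _ _ Hcm)).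
  assert (iV_eq : forall n g v, aV A g (Nat.iter n fV v) = Nat.iter n fV (aV A g v))
    by (intros; apply iter_comm; intro; symmetry; apply eV).
  assert (iD_eq : forall n g v, aD A g (Nat.iter n fD v) = Nat.iter n fD (aD A g v))
    by (intros; apply iter_comm; intro; symmetry; apply eD).
  assert (iD_inj : forall n d d', src d = src d' ->
            Nat.iter n fD d = Nat.iter n fD d' -> d = d').
  { induction n; simpl; intros d d' Hs H; auto. apply IHn; auto.
    apply HimD; auto. rewrite !iV_src, Hs; reflexivity. }
  assert (Lk : forall v : V X, exists l, forall d : D X, src d = v -> In d l).
  { intro v.
    assert (Hgen : forall L' : list (D X), exists l, forall d0, In d0 L' -> forall g,
               src (aD A g d0) = v -> In (aD A g d0) l).
    { induction L' as [|d0 rest IH]; [exists nil; intros; contradiction|].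
      destruct IH as [l Hl].
      destruct (classic (exists g1, aV A g1 (src d0) = v)) as [[g1 Hg1]|Hno].
      - destruct (pV (src d0)) as [Ls HLs].
        exists (l ++ map (fun s => aD A (gmul G g1 s) d0) Ls).
        intros d1 [<-|Hd1] g Hg; apply in_or_app; [right|left; auto].
        apply in_map_iff. exists (gmul G (ginv G g1) g). split.
        + rewrite gmulA, gmulV_r, gmul1; reflexivity.
        + apply HLs. rewrite mV, <- asrc, Hg, <- Hg1, act_inv_l; auto.
      - exists l. intros d1 [<-|Hd1] g Hg; auto.
        exfalso; apply Hno; exists g; rewrite <- asrc; auto. }
    destruct (Hgen LD) as [l Hl]. exists l. intros d Hd.
    destruct (HLD d) as [g [d0 [Hin ->]]]. apply Hl; auto. }
  set (perV := fun v => exists k h, 0 < k /\ Nat.iter k fV v = aV A h v).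
  assert (per_adj : forall u d, perV u -> src d = u -> perV (src (rev d))).
  { intros u d [k [h [Hk Hh]]] Hd.
    set (th := fun x => aD A (ginv G h) (Nat.iter k fD x)).
    destruct (Lk u) as [l Hl].
    assert (HP : forall x, src x = u -> src (th x) = u).
    { intros x Hx. unfold th. rewrite asrc, iV_src, Hx, Hh, act_inv_l; auto. }
    assert (Hinj : forall x y, src x = u -> src y = u -> th x = th y -> x = y).
    { intros x y Hx Hy H. apply (act_inj G _ _ oD mD) in H.
      apply (iD_inj k); auto; congruence. }
    destruct (fin_perm (fun x => src x = u) l Hl th HP Hinj d Hd) as [j [Hj Hjd]].
    assert (Hit : forall j x, exists g, Nat.iter j th x = aD A g (Nat.iter (k*j) fD x)).
    { induction j0 as [|j0 IH]; intro x.
      - exists (gone G). rewrite Nat.mul_0_r; simpl; rewrite oD; reflexivity.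
      - destruct (IH x) as [g Hg]. exists (gmul G (ginv G h) g).
        replace (k * succ j0) with (k + k * j0) by lia.
        simpl. rewrite Hg. unfold th. rewrite Nat.iter_add, <- iD_eq, mD. reflexivity. }
    destruct (Hit j d) as [g Hg]. rewrite Hjd in Hg.
    assert (Hg' : Nat.iter (k*j) fD d = aD A (ginv G g) d).
    { rewrite Hg at 2. rewrite act_inv_l; auto. }
    exists (k*j), (ginv G g). split; [nia|].
    rewrite <- iV_src, <- iD_rev, Hg', <- arev, asrc. reflexivity. }
  assert (all_per : forall v, perV v).
  { intro v.
    destruct (orbit_pigeon G _ _ oV mV LV HLV (fun i => Nat.iter i fV v))
      as [a [b [h [Hab He]]]]. simpl in He.
    assert (Pw : perV (Nat.iter a fV v)).
    { exists (b - a), h. split; [lia|]. rewrite <- Nat.iter_add.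
      replace (b - a + a) with b by lia. auto. }
    assert (Hprop : forall x y, clos_refl_trans _ (adjacent X) x y -> perV x -> perV y).
    { intros x y Hc. induction Hc as [x y [d [Hd1 Hd2]]|x|x y z _ IH1 _ IH2]; auto.
      intro Hx. rewrite <- Hd2. apply (per_adj x); auto. }
    exact (Hprop _ _ (Xconn (Nat.iter a fV v) v) Pw). }
  assert (per_mul : forall v k h, Nat.iter k fV v = aV A h v ->
            forall j, exists g, Nat.iter (k*j) fV v = aV A g v).
  { intros v k h Hh j. induction j as [|j [g Hg]].
    - exists (gone G); rewrite Nat.mul_0_r, oV; reflexivity.
    - exists (gmul G h g). replace (k * succ j) with (k*j + k) by lia.
      rewrite Nat.iter_add, Hh, <- iV_eq, Hg, mV. reflexivity. }
  assert (stab : forall v g, aV A g (fV v) = fV v -> aV A g v = v).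
  { intros v g Hg. destruct (all_per v) as [k [h [Hk Hh]]].
    destruct (pV v) as [l Hl].
    set (c := fun x => gmul G (ginv G h) (gmul G x h)).
    assert (Hck : forall x, aV A x (Nat.iter k fV v) = Nat.iter k fV v ->
                   aV A (c x) v = v).
    { intros x Hx. unfold c. rewrite !mV, <- Hh, Hx, Hh, act_inv_l; auto. }
    assert (HP : forall x, aV A x v = v -> aV A (c x) v = v).
    { intros x Hx. apply Hck. rewrite iV_eq, Hx; reflexivity. }
    assert (Hci : forall x y, c x = c y -> x = y).
    { unfold c; intros x y H. apply gcancel_l in H. apply gcancel_r in H; auto. }
    assert (Py : aV A (c g) v = v).
    { apply Hck. destruct k as [|k']; [lia|].
      rewrite Nat.iter_succ_r, iV_eq, Hg; reflexivity. }
    destruct (fin_perm (fun x => aV A x v = v) l Hl c HP (fun x y _ _ => Hci x y) _ Py)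
      as [j [Hj Hjy]].
    destruct j as [|j']; [lia|]. simpl in Hjy. apply Hci in Hjy. rewrite <- Hjy.
    assert (HPi : forall n x, aV A x v = v -> aV A (Nat.iter n c x) v = v).
    { induction n; simpl; auto. }
    apply HPi; auto. }
  assert (injV : forall v w, fV v = fV w -> v = w).
  { intros v w H.
    destruct (all_per v) as [k1 [h1 [Hk1 Hh1]]].
    destruct (all_per w) as [k2 [h2 [Hk2 Hh2]]].
    destruct (per_mul v k1 h1 Hh1 k2) as [g1 Hg1].
    destruct (per_mul w k2 h2 Hh2 k1) as [g2 Hg2].
    rewrite Nat.mul_comm in Hg2.
    destruct (k1 * k2) as [|K] eqn:HK; [nia|].
    rewrite Nat.iter_succ_r, H, <- Nat.iter_succ_r, Hg2 in Hg1.
    assert (Hw : w = aV A (gmul G (ginv G g2) g1) v).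
    { rewrite mV, <- Hg1, act_inv_l; auto. }
    assert (Hs : aV A (gmul G (ginv G g2) g1) v = v).
    { apply stab. rewrite <- eV, <- Hw. auto. }
    congruence. }
  assert (injD : forall d d', fD d = fD d' -> d = d').
  { intros d d' H. apply HimD; auto. apply injV.
    rewrite <- !(cm_src _ _ _ _ _ _ Hcm), H; reflexivity. }
  assert (injS : forall s s', fS s = fS s' -> s = s').
  { intros s s' H. apply HimS; auto. f_equal. apply injD.
    rewrite <- !(cm_lab _ _ _ _ _ _ Hcm), H; reflexivity. }
  assert (iS_nxt : forall n s, fS (Nat.iter n nxt s) = Nat.iter n nxt (fS s))
    by (intros; apply iter_comm; apply (cm_nxt _ _ _ _ _ _ Hcm)).
  assert (cell_it : forall n (s : S X), cell (Nat.iter n nxt s) = cell s).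
  { induction n; simpl; intro s; auto. rewrite cell_nxt; auto. }
  assert (injF : forall c1 c2, fF c1 = fF c2 -> c1 = c2).
  { intros c1 c2 H.
    destruct (cell_nonempty X c1) as [s1 <-]. destruct (cell_nonempty X c2) as [s2 <-].
    rewrite <- !(cm_cell _ _ _ _ _ _ Hcm) in H.
    destruct (cell_sides X _ _ H) as [n [Hn|Hn]].
    - rewrite <- iS_nxt in Hn. apply injS in Hn. subst; rewrite cell_it; auto.
    - rewrite <- (cm_flip _ _ _ _ _ _ Hcm), <- iS_nxt in Hn. apply injS in Hn.
      subst; rewrite cell_it, cell_flip; auto. }
  assert (surjV := orbit_surj G _ _ oV mV LV HLV fV eV injV).
  assert (surjD := orbit_surj G _ _ oD mD LD HLD fD eD injD).
  assert (surjF := orbit_surj G _ _ oF mF LF HLF fF eF injF).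
  assert (surjS : forall t, exists s, fS s = t).
  { intro t. destruct (surjF (cell t)) as [c Hc].
    destruct (cell_nonempty X c) as [s <-].
    rewrite <- (cm_cell _ _ _ _ _ _ Hcm) in Hc.
    destruct (cell_sides X _ _ Hc) as [n [Hn|Hn]].
    - exists (Nat.iter n nxt s). rewrite iS_nxt; auto.
    - exists (Nat.iter n nxt (flip s)). rewrite iS_nxt, (cm_flip _ _ _ _ _ _ Hcm); auto. }
  split; [exact Hcm|].
  repeat split; apply inj_surj_bij; auto.
Qed.
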